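(* Let $G_{wy}$ and $G_{zx}$ be Lagrangian grid diagrams of the same size $n$ (in the $(w,y)$-plane and the $(z,x)$-plane respectively) such that $|\Delta t(c_i)|\neq|\Delta t(c'_j)|$ for every crossing $c_i$ of $G_{wy}$ and every crossing $c'_j$ of $G_{zx}$. Then there is a Lagrangian hypercube diagram whose $wy$- and $zx$-projections are $G_{wy}$ and $G_{zx}$.
   Context: Grid conventions. In a plane with coordinates $(a,b)$ (here $(a,b)=(w,y)$ or $(a,b)=(z,x)$), an immersed grid diagram of size $n$ is an $n\times n$ grid of unit cells in $[0,n]^2$ with two kinds of markings at centers of cells, each row and each column containing exactly one marking of each kind; joining each marking of the first kind to the marking of the second kind in its row by an $a$-parallel segment, and each marking of the second kind to the marking of the first kind in its column by a $b$-parallel segment, gives an oriented connected closed piecewise-linear curve, with no crossing information, viewed as an immersion $\gamma:\mathbb{R}/2\pi\mathbb{Z}\to\mathbb{R}^2$, $\theta\mapsto(a(\theta),b(\theta))$. It is a Lagrangian grid diagram if (1) $\int_0^{2\pi}b\,a'\,d\theta=0$ and (2) $\int_{\theta_0}^{\theta_1}b\,a'\,d\theta\neq0$ whenever $\theta_0\neq\theta_1$ and $\gamma(\theta_0)=\gamma(\theta_1)$. For a crossing $c=\gamma(\theta_0)=\gamma(\theta_1)$ put $|\Delta t(c)|=|\int_{\theta_0}^{\theta_1}b\,a'\,d\theta|$. Hypercube diagrams. Let $C=[0,n]^4$ with coordinates $(w,x,y,z)$. A flat is a product in which two coordinates range over $[0,n]$ and the other two over unit intervals $[k,k+1]$, named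 by its two full coordinates; a cube is a product in which three coordinates range over $[0,n]$ and one over a unit interval. Markings are points with coordinates in $\mathbb{Z}+\frac12$ labelled $W,X,Y,Z$. Marking conditions: each cube contains exactly one marking of each label; each cube contains exactly two flats containing exactly three markings; in each such flat the three markings form a right angle with rays parallel to coordinate axes; its vertex is $W$ iff the flat is a $zw$-flat, $X$ iff a $wx$-flat, $Y$ iff an $xy$-flat, $Z$ iff a $yz$-flat. Join each $W$ to an $X$ by a $w$-parallel segment, each $X$ to a $Y$ by an $x$-parallel segment, each $Y$ to a $Z$ by a $y$-parallel segment and each $Z$ to a $W$ by a $z$-parallel segment; the projections of this curve to the $(w,y)$- and $(z,x)$-planes are immersed grid diagrams (the $wy$- and $zx$-projections). A Lagrangian hypercube diagram is such a marked hypercube satisfying the marking conditions whose two projections are Lagrangian grid diagrams with $|\Delta t(c)|\neq|\Delta t(c')|$ for all crossings $c$ of the $zx$-projection and $c'$ of the $wy$-projection. *)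

(* Defs.v *)
From HB Require Import structures.
From mathcomp Require Import all_boot all_order all_algebra.
From mathcomp Require Import reals.
Set Implicit Arguments. Unset Strict Implicit. Unset Printing Implicit Defensive.
Import Order.TTheory GRing.Theory Num.Theory.
Local Open Scope ring_scope.

(* A cell is a pair (i,j) : 'I_n * 'I_n, the cell [i,i+1] x [j,j+1]; a        *)
(* marking in that cell sits at its center (i + 1/2, j + 1/2).               *)
(* 'i' is the column (a-index), 'j' the row (b-index).                        *)
(* A grid of size n is the pair (first-kind markings, second-kind markings). *)
Definition cell n := ('I_n * 'I_n)%type.
Definition grid n := ({set cell n} * {set cell n})%type.

Definition one_per_line n (S : {set cell n}) : Prop :=
  (forall r : 'I_n, #|[set p in S | p.2 == r]| = 1%N) /\
  (forall c : 'I_n, #|[set p in S | p.1 == c]| = 1%N).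

(* A traversal of the curve of G: the cyclic list of its 2n corners
   v 0 (first kind), v 1 (second kind), v 2 (first kind), ...; from a
   first-kind marking one moves a-parallel (same row) to the second-kind
   marking, from a second-kind marking b-parallel (same column) to the next
   first-kind marking. Indices are taken mod 2n (ordS). *)
Definition traversal n (G : grid n) (v : 'I_(n.*2) -> cell n) : Prop :=
  injective v /\
  forall i : 'I_(n.*2),
    if ~~ odd i then (v i \in G.1) /\ ((v (ordS i)).2 = (v i).2)
    else (v i \in G.2) /\ ((v (ordS i)).1 = (v i).1).

(* An immersed grid diagram: markings one per row/column of each kind, the two
   kinds never share a cell (segments are non-degenerate), and the curve is a
   single closed component (a traversal visiting all 2n markings exists). *)
Definition immersed_grid n (G : grid n) : Prop :=
  (0 < n)%N /\ one_per_line G.1 /\ one_per_line G.2 /\ G.1 :&: G.2 = set0 /\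
  exists v, traversal G v.

Section Curve.
Variable R : realType.

Definition ccoord n (i : 'I_n) : R := (i%:R + 2^-1).

Definition vtx n (v : 'I_(n.*2) -> cell n) (k : 'I_(n.*2)) : R * R :=
  (ccoord (v k).1, ccoord (v k).2).

(* The curve is parametrized segment by segment: parameter (k, t), with
   k : 'I_(2n) and t in [0,1), is the point vtx k + t (vtx (k+1) - vtx k);
   this is a reparametrization of gamma : R/2piZ -> R^2 (theta = pi (k+t)/n). *)
Definition gam n (v : 'I_(n.*2) -> cell n) (k : 'I_(n.*2)) (t : R) : R * R :=
  let P := vtx v k in let Q := vtx v (ordS k) in
  (P.1 + t * (Q.1 - P.1), P.2 + t * (Q.2 - P.2)).

(* int_0^t b a' du along segment k (exact value for the linear segment) *)
Definition segint n (v : 'I_(n.*2) -> cell n) (k : 'I_(n.*2)) (t : R) : R :=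
  let P := vtx v k in let Q := vtx v (ordS k) in
  (Q.1 - P.1) * (P.2 * t + (Q.2 - P.2) * t ^+ 2 / 2).

Definition prim n (v : 'I_(n.*2) -> cell n) (k : 'I_(n.*2)) (t : R) : R :=
  \sum_(i < n.*2 | (i < k)%N) segint v i 1 + segint v k t.

Definition total n (v : 'I_(n.*2) -> cell n) : R :=
  \sum_(i < n.*2) segint v i 1.

Definition is_crossing n (v : 'I_(n.*2) -> cell n)
  (k0 : 'I_(n.*2)) (t0 : R) (k1 : 'I_(n.*2)) (t1 : R) : Prop :=
  0 <= t0 < 1 /\ 0 <= t1 < 1 /\ (k0, t0) <> (k1, t1) /\
  gam v k0 t0 = gam v k1 t1.

(* Delta t = int_{theta0}^{theta1} b a' dtheta *)
Definition delta_t n (v : 'I_(n.*2) -> cell n)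
  (k0 : 'I_(n.*2)) (t0 : R) (k1 : 'I_(n.*2)) (t1 : R) : R :=
  prim v k1 t1 - prim v k0 t0.

Definition lagrangian_grid n (G : grid n) : Prop :=
  immersed_grid G /\
  forall v, traversal G v ->
    total v = 0 /\
    forall k0 t0 k1 t1, is_crossing v k0 t0 k1 t1 -> delta_t v k0 t0 k1 t1 != 0.

Definition crossings_separated n (G G' : grid n) : Prop :=
  forall v v', traversal G v -> traversal G' v' ->
  forall k0 t0 k1 t1 k0' t0' k1' t1',
    is_crossing v k0 t0 k1 t1 -> is_crossing v' k0' t0' k1' t1' ->
    `|delta_t v k0 t0 k1 t1| != `|delta_t v' k0' t0' k1' t1'|.

End Curve.

(* half-integer coordinates is p : {ffun 'I_4 -> 'I_n} (coordinate c equals   *)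
(* p c + 1/2). Labels W,X,Y,Z are also indexed by cw,cx,cy,cz.                *)
(* A marked hypercube is mk : 'I_4 -> {set hpt n}, mk l = markings labelled l.*)
Definition cw : 'I_4 := @Ordinal 4 0 isT.
Definition cx : 'I_4 := @Ordinal 4 1 isT.
Definition cy : 'I_4 := @Ordinal 4 2 isT.
Definition cz : 'I_4 := @Ordinal 4 3 isT.

Definition hpt n := {ffun 'I_4 -> 'I_n}.
Definition marking_fn n := 'I_4 -> {set hpt n}.

Definition markings n (mk : marking_fn n) : {set 'I_4 * hpt n} :=
  [set m | m.2 \in mk m.1].

(* markings in the flat where coordinate d lies in [j,j+1] and e in [k,k+1]
   (d <> e); its two full coordinates are the other two. *)
Definition flat_marks n (mk : marking_fn n) (d : 'I_4) (j : 'I_n)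
  (e : 'I_4) (k : 'I_n) : {set 'I_4 * hpt n} :=
  [set m in markings mk | (m.2 d == j) && (m.2 e == k)].

Definition right_angle n (m0 m1 m2 : 'I_4 * hpt n) : Prop :=
  exists c1 c2 : 'I_4, c1 != c2 /\
    (forall c, (m1.2 c != m0.2 c) = (c == c1)) /\
    (forall c, (m2.2 c != m0.2 c) = (c == c2)).

Definition marking_conditions n (mk : marking_fn n) : Prop :=
  (forall (l d : 'I_4) (j : 'I_n), #|[set p in mk l | p d == j]| = 1%N) /\
  (* each cube contains exactly two flats with exactly three markings; a flat
     in cube (d,j) is determined by its other fixed coordinate e <> d and k *)
  (forall (d : 'I_4) (j : 'I_n),
     #|[set ek : 'I_4 * 'I_n | (ek.1 != d) &&
                               (#|flat_marks mk d j ek.1 ek.2| == 3%N)]| = 2%N) /\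
  (forall (d e : 'I_4) (j k : 'I_n), d != e ->
     #|flat_marks mk d j e k| = 3%N ->
     let F := [set c : 'I_4 | (c != d) && (c != e)] in
     exists m0 m1 m2,
       flat_marks mk d j e k = [set m0; m1; m2] /\ right_angle m0 m1 m2 /\
       (m0.1 == cw) = (F == [set cz; cw]) /\
       (m0.1 == cx) = (F == [set cw; cx]) /\
       (m0.1 == cy) = (F == [set cx; cy]) /\
       (m0.1 == cz) = (F == [set cy; cz])).

(* wy-projection: (a,b) = (w,y); first kind = W (= Z projected), second kind
   = X (= Y projected). *)
Definition proj_wy n (mk : marking_fn n) : grid n :=
  ([set ((p cw), (p cy)) | p : hpt n in mk cw], [set ((p cw), (p cy)) | p : hpt n in mk cx]).

(* zx-projection: (a,b) = (z,x); first kind = Z (= Y projected), second kind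
   = W (= X projected). *)
Definition proj_zx n (mk : marking_fn n) : grid n :=
  ([set ((p cz), (p cx)) | p : hpt n in mk cz], [set ((p cz), (p cx)) | p : hpt n in mk cw]).

Definition lagrangian_hypercube (R : realType) n (mk : marking_fn n) : Prop :=
  marking_conditions mk /\
  lagrangian_grid R (proj_wy mk) /\ lagrangian_grid R (proj_zx mk) /\
  crossings_separated R (proj_zx mk) (proj_wy mk).

(* Main.v *)
Require Import Defs.
From HB Require Import structures.
From mathcomp Require Import all_boot all_order all_algebra.
From mathcomp Require Import reals.
From mathcomp Require Import zify.
Set Implicit Arguments. Unset Strict Implicit. Unset Printing Implicit Defensive.

Lemma ord4P (c : 'I_4) : c = cw \/ c = cx \/ c = cy \/ c = cz.
Proof.
case: c => [[|[|[|[|m]]]] h];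
  [left|right;left|right;right;left|right;right;right|by []]; exact: val_inj.
Qed.

Lemma card4 (P : pred 'I_4) : #|[set i | P i]| = (P cw + P cx + P cy + P cz)%N.
Proof.
rewrite cardsE -sum1_card big_mkcond /= !big_ord_recl big_ord0 /=.
rewrite addn0 !addnA.
have -> : (lift ord0 ord0 : 'I_4) = cx by apply: val_inj.
have -> : (lift ord0 (lift ord0 ord0) : 'I_4) = cy by apply: val_inj.
have -> : (lift ord0 (lift ord0 (lift ord0 ord0)) : 'I_4) = cz by apply: val_inj.
have -> : (ord0 : 'I_4) = cw by apply: val_inj.
by rewrite /in_mem /= ; case: (P cw); case: (P cx); case: (P cy); case: (P cz).
Qed.

Lemma set4_eq (A B : {set 'I_4}) : (A == B) =
  [&& (cw \in A) == (cw \in B), (cx \in A) == (cx \in B),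
      (cy \in A) == (cy \in B) & (cz \in A) == (cz \in B)].
Proof.
apply/eqP/and4P => [->|[/eqP h1 /eqP h2 /eqP h3 /eqP h4]]; first by rewrite !eqxx.
by apply/setP => c; case: (ord4P c) => [->|[->|[->|->]]].
Qed.

Definition sh (c : 'I_4) : nat := (6 - c) %% 4.
Definition tt4 (d c : 'I_4) (i : nat) : nat := (4 + i + sh c - sh d) %/ 4.
Definition o4 (j : nat) : 'I_4 := nth cw [:: cw; cx; cy; cz] j.
Definition labd (d : 'I_4) (i : nat) : 'I_4 := o4 ((7 + i - sh d) %% 4).

Lemma o4K j : j < 4 -> val (o4 j) = j.
Proof. by case: j => [|[|[|[|]]]]. Qed.

Lemma sh_lt c : sh c < 4.
Proof. exact: ltn_pmod. Qed.

Definition ptK n (K : 'I_4 -> nat -> 'I_n) d (i : 'I_4) : hpt n :=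
  [ffun c => K c (tt4 d c i)].
Definition MMK n (K : 'I_4 -> nat -> 'I_n) d (i : 'I_4) : 'I_4 * hpt n :=
  (labd d i, ptK K d i).

Lemma labd_inj d : injective (fun i : 'I_4 => labd d i).
Proof.
move=> i j /(congr1 val); rewrite /labd !o4K; try exact: ltn_pmod.
move=> h; apply: val_inj => /=.
have := sh_lt d; have := ltn_ord i; have := ltn_ord j; lia.
Qed.

Lemma MMK_inj n K d : injective (@MMK n K d).
Proof. by move=> i j [/labd_inj]. Qed.

Lemma labd_one d l : exists i0 : 'I_4, [set i : 'I_4 | labd d i == l] = [set i0].
Proof.
have hl : (l + 1 + sh d) %% 4 < 4 by exact: ltn_pmod.
exists (Ordinal hl); apply/setP => i; rewrite !inE -!val_eqE /= /labd o4K;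
  last exact: ltn_pmod.
have := sh_lt d; have := ltn_ord i; have := ltn_ord l.
move=> h1 h2 h3; apply/eqP/eqP; lia.
Qed.

Ltac ev_tt := repeat match goal with |- context [tt4 ?d ?c ?i] =>
  let v := eval vm_compute in (tt4 d c i) in
  rewrite (_ : tt4 d c i = v); [|by []] end.
Ltac ev_lab := repeat match goal with |- context [labd ?d ?i] =>
  let v := eval vm_compute in (labd d i) in
  rewrite (_ : labd d i = v); [|by []] end.


Ltac kfin Ea Eb Ec h1 h2 :=
  rewrite ?Ea ?Eb ?Ec; try rewrite (negbTE Ea); try rewrite (negbTE Eb);
  try rewrite (negbTE Ec);
  try (by []);
  try (by move: h1; rewrite (eqP Ea) (eqP Eb) eqxx);
  try (by move: h2; rewrite (eqP Eb) (eqP Ec) eqxx).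

Lemma flats_char n (K : 'I_4 -> nat -> 'I_n)
  (H01 : forall c, (K c 0 == K c 1) = false)
  (H12 : forall c, (K c 1 == K c 2) = false) d :
  exists e1 e2 a1 a2, e1 != e2 /\ forall e k,
   ((e != d) && (#|[set i : 'I_4 | K e (tt4 d e i) == k]| == 3)) =
   ((e == e1) && (K e1 a1 == k)) || ((e == e2) && (K e2 a2 == k)).
Proof.
case: (ord4P d) => [->|[->|[->|->]]];
 [exists cx, cz, 1, 1 | exists cw, cy, 1, 1 | exists cx, cz, 1, 2 | exists cw, cy, 1, 0];
 (split; first by []); move=> e k; move: (H01 e) (H12 e) => h1 h2;
 have [Ea|Ea] := boolP (K e 0 == k); have [Eb|Eb] := boolP (K e 1 == k);
 have [Ec|Ec] := boolP (K e 2 == k);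
 case: (ord4P e) => [?|[?|[?|?]]]; subst e; rewrite card4 /=; ev_tt; kfin Ea Eb Ec h1 h2.
Qed.

Lemma imset3 (T : finType) (f : 'I_4 -> T) (P : pred 'I_4) a b c :
  (forall i, P i = [|| i == a, i == b | i == c]) ->
  f @: [set i | P i] = [set f a; f b; f c].
Proof.
move=> hP; have -> : [set i | P i] = [set a; b; c].
  by apply/setP => i; rewrite !inE hP orbA.
by rewrite imsetU imsetU1 !imset_set1.
Qed.

Ltac ra_tac H01 H12 H10 H21 :=
  split; [by [] | split; let c := fresh "c" in intro c; case: (ord4P c) => [?|[?|[?|?]]]; subst c;
   rewrite /MMK /ptK /= !ffunE; ev_tt;
   rewrite ?H01 ?H12 ?H10 ?H21 ?eqxx; by []].

Ltac solve_case i0 i1 i2 Ea Eb Ec H01 H12 H10 H21 :=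
  match goal with |- context [MMK ?K ?d] =>
  exists (MMK K d (o4 i1)), (MMK K d (o4 i0)), (MMK K d (o4 i2)) end; split;
  [ apply: imset3; let i := fresh "i" in intro i; case: (ord4P i) => [?|[?|[?|?]]]; subst i; ev_tt;
    rewrite ?Ea ?Eb ?Ec; try rewrite (negbTE Ea); try rewrite (negbTE Eb);
    try rewrite (negbTE Ec); by []
  | split; [ first [exists cw, cx; ra_tac H01 H12 H10 H21 | exists cw, cy; ra_tac H01 H12 H10 H21
                  | exists cw, cz; ra_tac H01 H12 H10 H21 | exists cx, cw; ra_tac H01 H12 H10 H21
                  | exists cx, cy; ra_tac H01 H12 H10 H21 | exists cx, cz; ra_tac H01 H12 H10 H21
                  | exists cy, cw; ra_tac H01 H12 H10 H21 | exists cy, cx; ra_tac H01 H12 H10 H21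
                  | exists cy, cz; ra_tac H01 H12 H10 H21 | exists cz, cw; ra_tac H01 H12 H10 H21
                  | exists cz, cx; ra_tac H01 H12 H10 H21 | exists cz, cy; ra_tac H01 H12 H10 H21]
           | rewrite /MMK /=; ev_lab; rewrite !set4_eq !inE; by [] ] ].

Lemma flat_ra n (K : 'I_4 -> nat -> 'I_n)
  (H01 : forall c, (K c 0 == K c 1) = false)
  (H12 : forall c, (K c 1 == K c 2) = false) d e k :
  d != e -> #|[set i : 'I_4 | K e (tt4 d e i) == k]| = 3 ->
  let F := [set c : 'I_4 | (c != d) && (c != e)] in
  exists m0 m1 m2,
    MMK K d @: [set i : 'I_4 | K e (tt4 d e i) == k] = [set m0; m1; m2] /\
    right_angle m0 m1 m2 /\
       (m0.1 == cw) = (F == [set cz; cw]) /\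
       (m0.1 == cx) = (F == [set cw; cx]) /\
       (m0.1 == cy) = (F == [set cx; cy]) /\
       (m0.1 == cz) = (F == [set cy; cz]).
Proof.
have H10 : forall c, (K c 1 == K c 0) = false by move=> c; rewrite eq_sym.
have H21 : forall c, (K c 2 == K c 1) = false by move=> c; rewrite eq_sym.
move=> hde; have [Ea|Ea] := boolP (K e 0 == k); have [Eb|Eb] := boolP (K e 1 == k);
 have [Ec|Ec] := boolP (K e 2 == k);
 case: (ord4P d) => [?|[?|[?|?]]]; subst d; case: (ord4P e) => [?|[?|[?|?]]]; subst e;
 try by [].
all: rewrite card4 /=; ev_tt; rewrite ?Ea ?Eb ?Ec; try rewrite (negbTE Ea);
 try rewrite (negbTE Eb); try rewrite (negbTE Ec); try (by move/eqP); move=> _; try move=> F.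
all: try (by move: (H01 cw) (H01 cx) (H01 cy) (H01 cz)
      (H12 cw) (H12 cx) (H12 cy) (H12 cz); rewrite ?(eqP Ea) ?(eqP Eb) ?(eqP Ec) ?eqxx).
all: first [solve_case 1 2 3 Ea Eb Ec H01 H12 H10 H21 | solve_case 0 1 2 Ea Eb Ec H01 H12 H10 H21].
Qed.

Lemma flats_two n (K : 'I_4 -> nat -> 'I_n)
  (H01 : forall c, (K c 0 == K c 1) = false)
  (H12 : forall c, (K c 1 == K c 2) = false) d :
  #|[set ek : 'I_4 * 'I_n | (ek.1 != d) &&
        (#|[set i : 'I_4 | K ek.1 (tt4 d ek.1 i) == ek.2]| == 3)]| = 2.
Proof.
have [e1 [e2 [a1 [a2 [ne H]]]]] := flats_char H01 H12 d.
rewrite (_ : [set ek : 'I_4 * 'I_n | _] = [set (e1, K e1 a1); (e2, K e2 a2)]).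
  by rewrite cards2 xpair_eqE (negbTE ne).
apply/setP => [[e k]]; rewrite !inE /= H !xpair_eqE.
by rewrite (eq_sym k) (eq_sym k).
Qed.

Definition idx n (H : 0 < n.*2) (a : nat) : 'I_(n.*2) := Ordinal (ltn_pmod a H).

Lemma idx_val n H a : val (@idx n H a) = a %% n.*2.
Proof. by []. Qed.

Lemma ordS_idx n H a : ordS (@idx n H a) = idx H a.+1.
Proof. by apply: val_inj; rewrite /= -addn1 modnDml addn1. Qed.

Lemma odd_idx n H a : odd (@idx n H a) = odd a.
Proof. by rewrite idx_val odd_mod // odd_double. Qed.

Lemma trav_even n (G : grid n) v H a : traversal G v -> ~~ odd a ->
  v (@idx n H a) \in G.1 /\ (v (idx H a.+1)).2 = (v (idx H a)).2.
Proof.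
move=> [_ hv] ha; have := hv (idx H a); rewrite odd_idx ha ordS_idx; by [].
Qed.

Lemma trav_odd n (G : grid n) v H a : traversal G v -> odd a ->
  v (@idx n H a) \in G.2 /\ (v (idx H a.+1)).1 = (v (idx H a)).1.
Proof.
move=> [_ hv] ha; have := hv (idx H a); rewrite odd_idx ha ordS_idx; by [].
Qed.

Lemma opl_row n (S : {set cell n}) p q : one_per_line S -> p \in S -> q \in S ->
  p.2 = q.2 -> p = q.
Proof.
move=> [hr _] hp hq e; have /cards1P [z hz] : #|[set x in S | x.2 == p.2]| == 1.
  by rewrite hr.
have : p \in [set x in S | x.2 == p.2] by rewrite inE hp eqxx.
have : q \in [set x in S | x.2 == p.2] by rewrite inE hq e eqxx.
by rewrite hz !inE => /eqP -> /eqP ->.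
Qed.

Lemma opl_col n (S : {set cell n}) p q : one_per_line S -> p \in S -> q \in S ->
  p.1 = q.1 -> p = q.
Proof.
move=> [_ hr] hp hq e; have /cards1P [z hz] : #|[set x in S | x.1 == p.1]| == 1.
  by rewrite hr.
have : p \in [set x in S | x.1 == p.1] by rewrite inE hp eqxx.
have : q \in [set x in S | x.1 == p.1] by rewrite inE hq e eqxx.
by rewrite hz !inE => /eqP -> /eqP ->.
Qed.

Lemma vshape n (G : grid n) v H a : traversal G v ->
  v (@idx n H a) = ((v (idx H (2 * ((a + 1) %/ 2)))).1, (v (idx H (2 * (a %/ 2)))).2).
Proof.
move=> hv; case: (boolP (odd a)) => ha.
- have e1 : a + 1 = (2 * ((a + 1) %/ 2)).
    by move: ha; rewrite -[a in odd a](odd_double_half a) -divn2; lia.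
  have e2 : a = (2 * (a %/ 2)).+1.
    by move: ha; rewrite -[a in odd a](odd_double_half a) -divn2; lia.
  have [_ h1] := trav_odd H hv ha.
  have h2 : ~~ odd (2 * (a %/ 2)) by rewrite oddM.
  have [_ h3] := trav_even H hv h2.
  rewrite -e1 addn1 h1 -e2 in h3 *; rewrite -h3; by case: (v _).
- have e2 : a = 2 * (a %/ 2).
    by move: ha; rewrite -[a in odd a](odd_double_half a) -divn2; lia.
  have e1 : (a + 1) %/ 2 = a %/ 2.
    by move: ha; rewrite -[a in odd a](odd_double_half a) -divn2; lia.
  by rewrite e1 -e2; case: (v _).
Qed.

Definition kap n (H : 0 < n.*2) (v u : 'I_(n.*2) -> cell n) (c : 'I_4) (q : nat)
  : 'I_n :=
  nth (v (idx H 0)).1 [:: (v (idx H (2 * q))).1; (u (idx H (2 * q))).2;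
                          (v (idx H (2 * q))).2; (u (idx H (2 * q))).1] c.

Definition pnt n H v u (y : nat) : hpt n :=
  [ffun c => @kap n H v u c ((y + sh c) %/ 4)].
Definition lab (y : nat) : 'I_4 := o4 ((y + 3) %% 4).
Definition mkf n H v u : marking_fn n :=
  fun l => [set @pnt n H v u y | y : 'I_(4 * n) & lab y == l].

Lemma idx2_per n H q : @idx n H (2 * (q + n)) = idx H (2 * q).
Proof. by apply: val_inj; rewrite /= mulnDr -mul2n modnDr. Qed.

Lemma kap_per n H v u c q : @kap n H v u c (q + n) = kap H v u c q.
Proof. by rewrite /kap idx2_per. Qed.

Lemma idx2_inj n H q q' : @idx n H (2 * q) = idx H (2 * q') -> q %% n = q' %% n.
Proof.
move=> /(congr1 val); rewrite /= -mul2n -!muln_modr => h.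
by apply/eqP; rewrite -(eqn_pmul2l (isT : 0 < 2)); apply/eqP.
Qed.

Lemma kap_inj n H (Gwy Gzx : grid n) v u c q q' :
  traversal Gwy v -> traversal Gzx u ->
  one_per_line Gwy.1 -> one_per_line Gzx.1 ->
  @kap n H v u c q = kap H v u c q' -> q %% n = q' %% n.
Proof.
move=> hv hu o1 o2.
have ev : forall q, ~~ odd (2 * q) by move=> ?; rewrite oddM.
have [hv1 _] := trav_even H hv (ev q); have [hv2 _] := trav_even H hv (ev q').
have [hu1 _] := trav_even H hu (ev q); have [hu2 _] := trav_even H hu (ev q').
case: (ord4P c) => [->|[->|[->|->]]] /= e; apply: idx2_inj.
- by apply: hv.1; apply: opl_col o1 hv1 hv2 e.
- by apply: hu.1; apply: opl_row o2 hu1 hu2 e.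
- by apply: hv.1; apply: opl_row o1 hv1 hv2 e.
- by apply: hu.1; apply: opl_col o2 hu1 hu2 e.
Qed.

Lemma pnt_per n H v u y : @pnt n H v u (y + 4 * n) = pnt H v u y.
Proof.
apply/ffunP => c; rewrite !ffunE.
have -> : (y + 4 * n + sh c) %/ 4 = (y + sh c) %/ 4 + n by lia.
by rewrite kap_per.
Qed.

Lemma pnt_mod n H v u y : @pnt n H v u (y %% (4 * n)) = pnt H v u y.
Proof.
rewrite {2}(divn_eq y (4 * n)); set N := 4 * n; move: (y %/ N) => k.
elim: k => [|k IH]; first by rewrite mul0n add0n.
rewrite mulSn -addnA addnC /N pnt_per; exact: IH.
Qed.

Lemma lab_mod n y : lab (y %% (4 * n)) = lab y.
Proof.
rewrite /lab; congr o4.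
by rewrite -modnDml (@modn_dvdm (4 * n) _ 4) ?dvdn_mulr // modnDml.
Qed.

Lemma lab_eq y l : (lab y == l) = ((y + 3) %% 4 == l).
Proof. by rewrite -val_eqE /lab o4K // ltn_pmod. Qed.

Lemma lab_per n y : lab (y + 4 * n) = lab y.
Proof. by rewrite /lab; congr o4; lia. Qed.

Definition kinj n H v u := forall c q q',
  @kap n H v u c q = kap H v u c q' -> q %% n = q' %% n.
Definition Kb n H v u b : 'I_4 -> nat -> 'I_n :=
  fun c dl => @kap n H v u c (b + n - 1 + dl).

Lemma cube_pt n H v u (hn : 0 < n) d b (i : 'I_4) :
  @pnt n H v u (4 * (b + n) - sh d + i) = ptK (Kb H v u b) d i.
Proof.
apply/ffunP => c; rewrite !ffunE /Kb; congr kap.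
have := sh_lt c; have := sh_lt d; have := ltn_ord i; rewrite /tt4; lia.
Qed.

Lemma cube_lab n d b (i : 'I_4) (hn : 0 < n) :
  lab (4 * (b + n) - sh d + i) = labd d i.
Proof. rewrite /lab /labd; congr o4; have := sh_lt d; lia. Qed.

Lemma small_mod n q b : q <= n -> b < n -> q %% n = b -> q = b \/ (q = n /\ b = 0).
Proof.
case: (ltngtP q n) => hq h1 h2 h3.
- by left; rewrite modn_small in h3.
- lia.
- by right; rewrite hq modnn in h3.
Qed.

Lemma markingsP n H v u mm :
  reflect (exists y : 'I_(4 * n), mm = (lab y, @pnt n H v u y))
          (mm \in markings (mkf H v u)).
Proof.
case: mm => l p; rewrite inE /=; apply: (iffP imsetP) => [[y hy ->]|[y [-> ->]]].
- by exists y; rewrite inE in hy; rewrite (eqP hy).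
- by exists y; rewrite // inE.
Qed.

Lemma kset n H v u (hk : kinj H v u) (hn : 0 < n) d b (hb : b < n)
  (P : pred ('I_4 * hpt n)) :
  [set mm in markings (mkf H v u) | (mm.2 d == @kap n H v u d b) && P mm] =
  MMK (Kb H v u b) d @: [set i | P (MMK (Kb H v u b) d i)].
Proof.
apply/setP => mm; rewrite inE; apply/andP/imsetP.
- case=> /markingsP [y ->] /andP [hd hP]; rewrite /= ffunE in hd.
  have := hk _ _ _ (eqP hd); rewrite (modn_small hb) => hq.
  have hy := ltn_ord y; have hsd := sh_lt d.
  have hq1 : (y + sh d) %/ 4 <= n by lia.
  have hi : (y + sh d) %% 4 < 4 by exact: ltn_pmod.
  have E : (lab y, pnt H v u y) = MMK (Kb H v u b) d (Ordinal hi).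
    rewrite /MMK -(cube_lab d b (Ordinal hi) hn) -(cube_pt H v u hn d b (Ordinal hi)) /=.
    have [e1|[e1 e2]] := small_mod hq1 hb hq.
    + have -> : 4 * (b + n) - sh d + (y + sh d) %% 4 = y + 4 * n by lia.
      by rewrite lab_per pnt_per.
    + by have -> : 4 * (b + n) - sh d + (y + sh d) %% 4 = y by lia.
  by exists (Ordinal hi); rewrite // inE -E.
- case=> i hi ->; split.
  + apply/markingsP.
    have hx : (4 * (b + n) - sh d + i) %% (4 * n) < 4 * n by apply: ltn_pmod; lia.
    by exists (Ordinal hx); rewrite /= lab_mod pnt_mod cube_lab // cube_pt.
  + rewrite inE in hi; rewrite hi andbT /= ffunE /Kb.
    have -> : b + n - 1 + tt4 d d i = b + n.
      by have := ltn_ord i; rewrite /tt4; lia.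
    by rewrite kap_per.
Qed.

Lemma modS_neq n a : 1 < n -> a %% n = (a + 1) %% n -> False.
Proof.
move=> hn e; have : (a + 1 == a %[mod n]) by rewrite e.
by rewrite eqn_mod_dvd ?leq_addr // addnC addnK dvdn1 => /eqP h; rewrite h in hn.
Qed.

Lemma Kb01 n H v u (hk : kinj H v u) (hn : 1 < n) b c :
  (@Kb n H v u b c 0 == Kb H v u b c 1) = false.
Proof.
apply/negbTE/negP => /eqP /hk; rewrite addn0 => e; exact: modS_neq hn e.
Qed.

Lemma Kb12 n H v u (hk : kinj H v u) (hn : 1 < n) b c :
  (@Kb n H v u b c 1 == Kb H v u b c 2) = false.
Proof.
apply/negbTE/negP => /eqP /hk e; apply: (modS_neq (a := b + n - 1 + 1) hn).
by rewrite e; congr modn; lia.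
Qed.

Lemma flatE n H v u (hk : kinj H v u) (hn : 0 < n) d b (hb : b < n) e k :
  flat_marks (mkf H v u) d (@kap n H v u d b) e k =
  MMK (Kb H v u b) d @: [set i : 'I_4 | Kb H v u b e (tt4 d e i) == k].
Proof.
rewrite /flat_marks (kset hk hn d hb (fun mm => mm.2 e == k)).
apply/setP => x; apply/imsetP/imsetP => [[i hi ->]|[i hi ->]]; exists i => //; move: hi; by rewrite !inE /= ffunE.
Qed.

Lemma mem_markings n (mk : marking_fn n) mm : (mm \in markings mk) = (mm.2 \in mk mm.1).
Proof. by rewrite /markings in_set. Qed.

Lemma mk_conditions n H v u (hk : kinj H v u) (hn : 1 < n)
  (hs : forall d (j : 'I_n), exists2 b, b < n & @kap n H v u d b = j) :
  marking_conditions (mkf H v u).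
Proof.
have hn0 : 0 < n by lia.
split; [|split].
- move=> l d j; have [b hb <-] := hs d j; have [i0 hi0] := labd_one d l.
  rewrite (_ : [set p in mkf H v u l | p d == kap H v u d b] =
     snd @: [set mm in markings (mkf H v u) | (mm.2 d == kap H v u d b) && (mm.1 == l)]).
    rewrite (kset hk hn0 d hb (fun mm => mm.1 == l)).
    rewrite (_ : [set i | (fun mm : 'I_4 * hpt n => mm.1 == l) (MMK (Kb H v u b) d i)] = [set i0]).
      by rewrite !imset_set1 cards1.
    by rewrite -hi0; apply/setP => i; rewrite !inE.
  apply/setP => p; rewrite in_set; apply/andP/imsetP.
  + case=> hp hd; exists (l, p) => //; by rewrite in_set mem_markings /= hp hd eqxx.
  + case=> [[l' p']]; rewrite in_set mem_markings /= => /andP [hp /andP [hd /eqP el]] ->.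
    by subst l'.
- move=> d j; have [b hb <-] := hs d j.
  rewrite (_ : [set ek | _] = [set ek : 'I_4 * 'I_n | (ek.1 != d) &&
        (#|[set i : 'I_4 | Kb H v u b ek.1 (tt4 d ek.1 i) == ek.2]| == 3)]).
    by apply: flats_two; [exact: Kb01 | exact: Kb12].
  apply: eq_finset => ek; rewrite (flatE hk hn0 d hb) card_imset //; exact: MMK_inj.
- move=> d e j k hde; have [b hb <-] := hs d j.
  rewrite (flatE hk hn0 d hb) card_imset; last exact: MMK_inj.
  move=> hc; apply: flat_ra => //; [exact: Kb01 | exact: Kb12].
Qed.

Lemma opl_card n (S : {set cell n}) : one_per_line S -> #|S| <= n.
Proof.
move=> o; rewrite -(card_in_imset (f := snd)); last first.
  by move=> p q hp hq; apply: opl_row o hp hq.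
by rewrite -[X in _ <= X]card_ord max_card.
Qed.

Lemma fill n (S : {set cell n}) (f : 'I_n -> cell n) :
  one_per_line S -> injective f -> (forall i, f i \in S) -> S = [set f i | i : 'I_n].
Proof.
move=> o fi fS; apply/eqP; rewrite eq_sym eqEcard; apply/andP; split.
  by apply/subsetP => p /imsetP [i _ ->].
by rewrite card_imset // ?cardsT card_ord opl_card.
Qed.

Lemma idx2_injective n H (v : 'I_(n.*2) -> cell n) k : injective v ->
  injective (fun i : 'I_n => v (@idx n H (2 * i + k))) -> True.
Proof. by []. Qed.

Lemma grid_eq n H (G : grid n) v : traversal G v ->
  one_per_line G.1 -> one_per_line G.2 ->
  G.1 = [set v (@idx n H (2 * i)) | i : 'I_n] /\
  G.2 = [set v (@idx n H (2 * i + 1)) | i : 'I_n].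
Proof.
move=> hv o1 o2; split; apply: fill => //.
- move=> i j /hv.1 /(congr1 val) /=; have := ltn_ord i; have := ltn_ord j.
  move=> hi hj; rewrite !modn_small; try lia.
  by move=> h; apply: ord_inj; lia.
- move=> i; have h : ~~ odd (2 * i) by rewrite oddM.
  by have [] := trav_even H hv h.
- move=> i j /hv.1 /(congr1 val) /=; have := ltn_ord i; have := ltn_ord j.
  move=> hi hj; rewrite !modn_small; try lia.
  by move=> h; apply: ord_inj; lia.
- move=> i; have h : odd (2 * i + 1) by rewrite oddD oddM.
  by have [] := trav_odd H hv h.
Qed.

Lemma proj_img (T : finType) n H v u (g : hpt n -> T) l :
  [set g p | p in mkf H v u l] =
  [set g (@pnt n H v u (nat_of_ord y)) | y in [set y : 'I_(4 * n) | lab y == l]].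
Proof. by rewrite /mkf -imset_comp. Qed.

Lemma img_lab (T : finType) n (F : nat -> T) (l : 'I_4) :
  [set F (nat_of_ord y) | y in [set y : 'I_(4 * n) | lab y == l]] =
  [set F (4 * i + (l + 1) %% 4) | i : 'I_n].
Proof.
have hl := ltn_ord l.
apply/setP => t; apply/imsetP/imsetP => [[y hy ->]|[i _ ->]].
- rewrite inE lab_eq in hy; have hy' := ltn_ord y.
  have hi : y %/ 4 < n by lia.
  by exists (Ordinal hi) => //; congr F; move/eqP: hy => /= hy; lia.
- have hi := ltn_ord i; have hy : 4 * i + (l + 1) %% 4 < 4 * n by lia.
  by exists (Ordinal hy) => //; rewrite inE lab_eq /=; apply/eqP; lia.
Qed.

Lemma wy_pt n H (G : grid n) v u y : traversal G v ->
  ((@pnt n H v u y) cw, (pnt H v u y) cy) = v (idx H (y %/ 2)).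
Proof.
move=> hv; rewrite (vshape H _ hv) !ffunE /kap /=.
rewrite (_ : sh cw = 2) // (_ : sh cy = 0) //.
by congr pair; congr (v (idx H _)).1 || congr (v (idx H _)).2; lia.
Qed.

Lemma zx_pt n H (G : grid n) v u y : traversal G u ->
  ((@pnt n H v u y) cz, (pnt H v u y) cx) = u (idx H ((y + 1) %/ 2)).
Proof.
move=> hu; rewrite (vshape H _ hu) !ffunE /kap /=.
rewrite (_ : sh cz = 3) // (_ : sh cx = 1) //.
by congr pair; congr (u (idx H _)).1 || congr (u (idx H _)).2; lia.
Qed.

Lemma proj_wy_eq n H (G : grid n) v u : traversal G v ->
  one_per_line G.1 -> one_per_line G.2 -> proj_wy (@mkf n H v u) = G.
Proof.
move=> hv o1 o2; have [e1 e2] := grid_eq H hv o1 o2.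
case: G hv o1 o2 e1 e2 => [G1 G2] hv o1 o2 /= e1 e2.
rewrite /proj_wy e1 e2; congr pair.
- rewrite (proj_img H v u (fun p : hpt n => (p cw, p cy))) (img_lab n (fun y : nat => ((pnt H v u y) cw, (pnt H v u y) cy))); apply: eq_imset => i /=.
  by rewrite (@wy_pt n H _ v u _ hv); congr (v (idx H _)); lia.
- rewrite (proj_img H v u (fun p : hpt n => (p cw, p cy))) (img_lab n (fun y : nat => ((pnt H v u y) cw, (pnt H v u y) cy))); apply: eq_imset => i /=.
  by rewrite (@wy_pt n H _ v u _ hv); congr (v (idx H _)); lia.
Qed.

Lemma proj_zx_eq n H (G : grid n) v u : traversal G u ->
  one_per_line G.1 -> one_per_line G.2 -> proj_zx (@mkf n H v u) = G.
Proof.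
move=> hu o1 o2; have [e1 e2] := grid_eq H hu o1 o2.
case: G hu o1 o2 e1 e2 => [G1 G2] hu o1 o2 /= e1 e2.
rewrite /proj_zx e1 e2; congr pair.
- rewrite (proj_img H v u (fun p : hpt n => (p cz, p cx))) (img_lab n (fun y : nat => ((pnt H v u y) cz, (pnt H v u y) cx))); apply: eq_imset => i /=.
  by rewrite (@zx_pt n H _ v u _ hu); congr (u (idx H _)); lia.
- rewrite (proj_img H v u (fun p : hpt n => (p cz, p cx))) (img_lab n (fun y : nat => ((pnt H v u y) cz, (pnt H v u y) cx))); apply: eq_imset => i /=.
  by rewrite (@zx_pt n H _ v u _ hu); congr (u (idx H _)); lia.
Qed.

Unset Implicit Arguments.

Theorem theorem8p4 (R : realType) (n : nat) (Gwy Gzx : grid n) :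
  lagrangian_grid R Gwy -> lagrangian_grid R Gzx ->
  crossings_separated R Gwy Gzx ->
  exists mk : marking_fn n,
    lagrangian_hypercube R mk /\ proj_wy mk = Gwy /\ proj_zx mk = Gzx.
Proof.
move=> LW LZ Hsep.
have [[hn0 [o1 [o2 [dj [v hv]]]]] _] := LW.
have [[_ [o1' [o2' [_ [u hu]]]]] _] := LZ.
have H : 0 < n.*2 by rewrite double_gt0.
have hk : kinj H v u by move=> c q q'; exact: kap_inj hv hu o1 o1'.
have hn : 1 < n.
  case: (ltnP 1 n) => // hle; exfalso.
  have [a1 _] := trav_even H hv (isT : ~~ odd 0).
  have [a2 _] := trav_odd H hv (isT : odd 1).
  have E : forall p q : cell n, p = q.
    move=> [a b] [c d]; congr pair; apply: ord_inj;
    move: (ltn_ord a) (ltn_ord b) (ltn_ord c) (ltn_ord d); lia.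
  have e : v (idx H 0) = v (idx H 1) := E _ _.
  have : v (idx H 0) \in Gwy.1 :&: Gwy.2 by rewrite inE a1 e a2.
  by rewrite dj inE.
have hs : forall d (j : 'I_n), exists2 b, b < n & kap H v u d b = j.
  move=> d j.
  have inj : injective (fun i : 'I_n => kap H v u d i).
    by move=> i i' /hk; rewrite !modn_small //; apply: ord_inj.
  by have /codomP [i ->] := injF_onto inj j; exists i.
exists (mkf H v u).
have pw := proj_wy_eq H u hv o1 o2.
have pz := proj_zx_eq H v hu o1' o2'.
split; last by [].
rewrite /lagrangian_hypercube pw pz; split; first exact: mk_conditions.
split => //; split => //.
move=> w w' hw hw' k0 t0 k1 t1 k0' t0' k1' t1' c c'; rewrite eq_sym.
exact: (Hsep _ _ hw' hw _ _ _ _ _ _ _ _ c' c).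
Qed.
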